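(* Let $M\ge1$, $h_1,\dots,h_M\ge0$, $P_{\rm peak}>0$, $\sigma^2>0$ and $\lambda,\beta\ge0$. Then the problem $\max_{0\le p\le P_{\rm peak},\ 0\le\alpha_m\le1\ (m=1,\dots,M)}\ \log\Big(1+\frac{\sum_{m=1}^M\alpha_m h_mp}{\sigma^2}\Big)+\sum_{m=1}^M\lambda(1-\alpha_m)h_mp-\beta p$ is equivalent to (in particular, has the same optimal value as) the problem $\max_{0\le\alpha\le1,\ 0\le p\le P_{\rm peak}}\ \log\Big(1+\frac{\alpha\sum_{m=1}^M h_mp}{\sigma^2}\Big)+(1-\alpha)\sum_{m=1}^M\lambda h_mp-\beta p.$
   Context: Here $h_m$ is the channel power gain to receive antenna $m$, $\alpha_m$ is the power splitting ratio at antenna $m$, $p$ the transmit power, and $\log$ is the natural logarithm. *)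

(* Defs.v *)
From mathcomp Require Import all_boot all_order all_algebra.
From mathcomp Require Import reals exp.
Set Implicit Arguments. Unset Strict Implicit. Unset Printing Implicit Defensive.
Import Order.TTheory GRing.Theory Num.Theory.
Local Open Scope ring_scope.

Definition obj1 (R : realType) (M : nat) (h : 'I_M -> R) (sigma2 lam beta : R)
  (p : R) (alpha : 'I_M -> R) : R :=
  ln (1 + (\sum_(m < M) alpha m * h m * p) / sigma2)
  + \sum_(m < M) lam * (1 - alpha m) * h m * p - beta * p.

Definition feas1 (R : realType) (M : nat) (Ppeak p : R) (alpha : 'I_M -> R) : Prop :=
  0 <= p <= Ppeak /\ forall m, 0 <= alpha m <= 1.

Definition obj2 (R : realType) (M : nat) (h : 'I_M -> R) (sigma2 lam beta : R)
  (p alpha : R) : R :=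
  ln (1 + alpha * (\sum_(m < M) h m * p) / sigma2)
  + (1 - alpha) * (\sum_(m < M) lam * h m * p) - beta * p.

Definition feas2 (R : realType) (Ppeak p alpha : R) : Prop :=
  0 <= alpha <= 1 /\ 0 <= p <= Ppeak.

Definition is_max1 (R : realType) (M : nat) (h : 'I_M -> R) (Ppeak sigma2 lam beta v : R) : Prop :=
  (exists p alpha, feas1 Ppeak p alpha /\ obj1 h sigma2 lam beta p alpha = v) /\
  (forall p alpha, feas1 Ppeak p alpha -> obj1 h sigma2 lam beta p alpha <= v).

Definition is_max2 (R : realType) (M : nat) (h : 'I_M -> R) (Ppeak sigma2 lam beta v : R) : Prop :=
  (exists p alpha, feas2 Ppeak p alpha /\ obj2 h sigma2 lam beta p alpha = v) /\
  (forall p alpha, feas2 Ppeak p alpha -> obj2 h sigma2 lam beta p alpha <= v).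

(* Main.v *)
Require Import Defs.
From mathcomp Require Import all_boot all_order all_algebra.
From mathcomp Require Import ring lra.
From mathcomp Require Import all_classical all_reals all_analysis.
Import Order.TTheory GRing.Theory Num.Theory.
Import numFieldNormedType.Exports.
Local Open Scope ring_scope.
Local Open Scope classical_set_scope.

Definition FF (R : realType) (H L s b : R) (q : R * R) : R :=
  ln (1 + `|q.2 * (H * q.1)| / s) + (1 - q.2) * (L * q.1) - b * q.1.
Lemma Fcont (R : realType) (H L s b : R) : 0 < s ->
  continuous (@FF R H L s b).
Proof.
move=> s0 q; rewrite /FF.
have c1 : continuous (fun q : R * R => q.1) by move=> ?; exact: cvg_fst.
have c2 : continuous (fun q : R * R => q.2) by move=> ?; exact: cvg_snd.
have cc : forall c : R, continuous (fun _ : R * R => c) by move=> c ?; exact: cvg_cst.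
apply: cvgB; last by apply: cvgM; [exact: cc|exact: c1].
apply: cvgD; last first.
  apply: cvgM; first by apply: cvgB; [exact: cc|exact: c2].
  by apply: cvgM; [exact: cc|exact: c1].
have h1 : {for q, continuous (fun q : R * R => 1 + `|q.2 * (H * q.1)| / s)}.
  apply: cvgD; first exact: cc.
  apply: cvgM; last exact: cc.
  apply: (@continuous_comp _ _ _ (fun q : R * R => q.2 * (H * q.1)) Num.norm).
    by apply: cvgM; [exact: c2| apply: cvgM; [exact: cc|exact: c1]].
  exact: norm_continuous.
apply: (continuous_comp h1).
apply: continuous_ln.
by rewrite ltr_wpDr // divr_ge0 // ltW.
Qed.

Local Close Scope classical_set_scope.

Lemma obj1E (R : realType) (M : nat) (h : 'I_M -> R) (s l b p : R) (alpha : 'I_M -> R) :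
  obj1 h s l b p alpha = ln (1 + (\sum_(m < M) alpha m * h m) * p / s)
     + l * ((\sum_(m < M) h m) - \sum_(m < M) alpha m * h m) * p - b * p.
Proof.
rewrite /obj1; congr (ln (1 + _ / _) + _ - _); first by rewrite mulr_suml.
rewrite -sumrB. rewrite mulr_sumr. rewrite mulr_suml. apply: eq_bigr => m _. ring.
Qed.

Lemma obj2E (R : realType) (M : nat) (h : 'I_M -> R) (s l b p a : R) :
  obj2 h s l b p a = ln (1 + a * ((\sum_(m < M) h m) * p) / s)
     + (1 - a) * ((l * \sum_(m < M) h m) * p) - b * p.
Proof.
rewrite /obj2; congr (ln (1 + _ * _ / _) + (_ - _) * _ - _); first by rewrite mulr_suml.
by rewrite mulr_sumr mulr_suml.
Qed.

Lemma obj12 (R : realType) (M : nat) (h : 'I_M -> R) (s l b p a : R) (alpha : 'I_M -> R) :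
  \sum_(m < M) alpha m * h m = a * \sum_(m < M) h m ->
  obj1 h s l b p alpha = obj2 h s l b p a.
Proof.
move=> e; rewrite obj1E obj2E e mulrA; congr (_ + _ - _); ring.
Qed.

Theorem lemma5p2 (R : realType) (M : nat) (h : 'I_M -> R) (Ppeak sigma2 lam beta : R) :
  (1 <= M)%N -> (forall m, 0 <= h m) -> 0 < Ppeak -> 0 < sigma2 ->
  0 <= lam -> 0 <= beta ->
  exists v : R, is_max1 h Ppeak sigma2 lam beta v /\ is_max2 h Ppeak sigma2 lam beta v.
Proof.
move=> M1 h0 P0 s0 l0 b0.
set H := \sum_(m < M) h m.
have H0 : 0 <= H by apply: sumr_ge0 => m _.
pose F := @FF R H (lam * H) sigma2 beta.
pose A : set (R * R) := (`[0, Ppeak]%classic `*` `[0, 1]%classic)%classic.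
have cA : compact A by apply: compact_setX; exact: segment_compact.
have inA : forall p a, 0 <= p <= Ppeak -> 0 <= a <= 1 -> (p, a) \in A.
  by move=> p a hp ha; rewrite inE; split; rewrite /= in_itv /=.
have A0 : (A !=set0)%classic.
  exists (0, 0); have := inA 0 0; rewrite inE; apply; by rewrite lexx ?ltW ?ler01.
have [[p0 a0] cA' cmax] := compact_EVT_max A0 cA (continuous_subspaceT (@Fcont R H (lam * H) sigma2 beta s0)).
rewrite inE in cA'; case: cA' => /=; rewrite !in_itv /= => hp ha.
have FE : forall p a, 0 <= p -> 0 <= a -> F (p, a) = obj2 h sigma2 lam beta p a.
  move=> p a pp aa; rewrite obj2E /F /FF /= ger0_norm //.
  by rewrite mulr_ge0 // mulr_ge0.
exists (F (p0, a0)); split; last first.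
  split.
    exists p0, a0; split; first by split.
    by rewrite FE //; case/andP: hp; case/andP: ha.
  move=> p a [ha' hp']; rewrite -FE; first exact: cmax (inA _ _ hp' ha').
    by case/andP: hp'.
  by case/andP: ha'.
split.
  exists p0, (fun=> a0); split; first by split.
  rewrite (@obj12 _ _ _ _ _ _ _ a0); last by rewrite mulr_sumr.
  by rewrite FE //; case/andP: hp; case/andP: ha.
move=> p al [hp' hal].
set S := \sum_(m < M) al m * h m.
have S0 : 0 <= S by apply: sumr_ge0 => m _; case/andP: (hal m) => ? ?; rewrite mulr_ge0.
have SH : S <= H.
  apply: ler_sum => m _; case/andP: (hal m) => ? ?.
  by rewrite -[leRHS]mul1r ler_wpM2r.
pose a := if H == 0 then 0 else S / H.
have aH : S = a * H.
  rewrite /a; case: eqP => [H00|/eqP Hn]; last by rewrite divfK.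
  by rewrite mul0r; apply: le_anti; rewrite S0 -H00 SH.
have ha1 : 0 <= a <= 1.
  rewrite /a; case: eqP => [_|/eqP Hn]; first by rewrite lexx ler01.
  have Hp : 0 < H by rewrite lt_def Hn H0.
  by rewrite divr_ge0 //= ler_pdivrMr // mul1r.
rewrite (@obj12 _ _ _ _ _ _ _ a) //.
rewrite -FE; first exact: cmax (inA _ _ hp' ha1).
  by case/andP: hp'.
by case/andP: ha1.
Qed.
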